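(* Let $\Lambda$ be a row-finite $k$-graph with no sources, $R$ a commutative ring with $1$, and $m\in\mathbb{N}^k$. Then the family $\{s_\alpha s_{\beta^*}: \alpha,\beta\in\Lambda,\ s(\alpha)=s(\beta),\ d(\beta)=m\}$ (indexed by the pairs $(\alpha,\beta)$) is linearly independent over $R$ in $\mathrm{KP}_R(\Lambda)$. (In particular, for $m=0$, $\{s_\alpha:\alpha\in\Lambda\}$ is linearly independent.)
   Context: A $k$-graph is a countable category $\Lambda$ with a functor $d:\Lambda\to\mathbb{N}^k$ ($\mathbb{N}^k$ a one-object category under addition) with unique factorization: whenever $d(\lambda)=m+n$ there are unique $\mu,\nu$ with $d(\mu)=m,d(\nu)=n,\lambda=\mu\nu$. $\Lambda^0$ = vertices (degree-$0$ morphisms), $\Lambda^n=d^{-1}(n)$, $r,s$ range and source, $\lambda\mu$ defined when $s(\lambda)=r(\mu)$, $v\Lambda^n=\{\lambda\in\Lambda^n:r(\lambda)=v\}$. Row-finite: $v\Lambda^n$ finite; no sources: $v\Lambda^n\ne\emptyset$. Kumjian-Pask $\Lambda$-family in an $R$-algebra $A$: $P:\Lambda^0\to A$, $S:\Lambda^{\ne0}\cup\{\lambda^*:\lambda\in\Lambda^{\neq0}\}\to A$ (with $\Lambda^{\neq0}$ the paths of nonzero degree) such that (KP1) $P_v$ are mutually orthogonal idempotents; (KP2) for $r(\mu)=s(\lambda)$: $S_\lambda S_\mu=S_{\lambda\mu}$, $S_{\mu^*}S_{\lambda^*}=S_{(\lambda\mu)^*}$, $P_{r(\lambda)}S_\lambda=S_\lambda=S_\lambda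 P_{s(\lambda)}$, $P_{s(\lambda)}S_{\lambda^*}=S_{\lambda^*}=S_{\lambda^*}P_{r(\lambda)}$; (KP3) $S_{\lambda^*}S_\mu=\delta_{\lambda,\mu}P_{s(\lambda)}$ when $d(\lambda)=d(\mu)$; (KP4) $P_v=\sum_{\lambda\in v\Lambda^n}S_\lambda S_{\lambda^*}$ for $n\ne0$. $\mathrm{KP}_R(\Lambda)$ is the $R$-algebra generated by a universal such family $(p,s)$. Convention: for a vertex $v$, $s_v$ and $s_{v^*}$ both mean $p_v$. *)

(* Defs.v *)
From mathcomp Require Import all_boot all_order all_algebra.
Set Implicit Arguments. Unset Strict Implicit. Unset Printing Implicit Defensive.
Import GRing.Theory.
Local Open Scope ring_scope.

Definition deg_t (k : nat) := {ffun 'I_k -> nat}.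
Definition dzero (k : nat) : deg_t k := [ffun _ => 0%N].
Definition dadd (k : nat) (m n : deg_t k) : deg_t k := [ffun i => (m i + n i)%N].

(* Composition kcomp l m is
   "l m" (first m, then l), meaningful when ks l = kr m. *)
Record kgraph (k : nat) := KGraph {
  kV : countType;
  kP : countType;
  kr : kP -> kV;
  ks : kP -> kV;
  kid : kV -> kP;
  kcomp : kP -> kP -> kP;
  kd : kP -> deg_t k;
  kr_id : forall v, kr (kid v) = v;
  ks_id : forall v, ks (kid v) = v;
  kr_comp : forall l m, ks l = kr m -> kr (kcomp l m) = kr l;
  ks_comp : forall l m, ks l = kr m -> ks (kcomp l m) = ks m;
  kcomp_idl : forall l, kcomp (kid (kr l)) l = l;
  kcomp_idr : forall l, kcomp l (kid (ks l)) = l;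
  kcompA : forall l m n, ks l = kr m -> ks m = kr n ->
     kcomp (kcomp l m) n = kcomp l (kcomp m n);
  kd_id : forall v, kd (kid v) = dzero k;
  kd_comp : forall l m, ks l = kr m -> kd (kcomp l m) = dadd (kd l) (kd m);
  kfactor : forall l (m n : deg_t k), kd l = dadd m n ->
     exists mu, exists nu,
       [/\ kd mu = m, kd nu = n, ks mu = kr nu & l = kcomp mu nu] /\
       (forall mu' nu', kd mu' = m -> kd nu' = n -> ks mu' = kr nu' ->
          l = kcomp mu' nu' -> mu' = mu /\ nu' = nu)
}.

Definition row_finite k (L : kgraph k) : Prop :=
  forall (v : kV L) (n : deg_t k), exists s : seq (kP L),
    forall l : kP L, kr l = v -> kd l = n -> l \in s.

Definition no_sources k (L : kgraph k) : Prop :=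
  forall (v : kV L) (n : deg_t k), exists l : kP L, kr l = v /\ kd l = n.

Record nalg_mul (R : comPzRingType) (A : lmodType R) := NAlgMul {
  amul :> A -> A -> A;
  amulA : forall x y z, amul x (amul y z) = amul (amul x y) z;
  amulDl : forall x y z, amul (x + y) z = amul x z + amul y z;
  amulDr : forall x y z, amul x (y + z) = amul x y + amul x z;
  amulZl : forall (r : R) x y, amul (r *: x) y = r *: amul x y;
  amulZr : forall (r : R) x y, amul x (r *: y) = r *: amul x y
}.

(* ---------- Kumjian-Pask families ----------
   p : vertices -> A ; s, st : paths -> A give S_lambda and S_{lambda^*};
   only their values on paths of nonzero degree matter. *)
Section KP.
Variables (k : nat) (L : kgraph k) (R : comPzRingType) (A : lmodType R)
          (mul : nalg_mul A).

Definition is_KP_family (p : kV L -> A) (s st : kP L -> A) : Prop :=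
  (forall v, mul (p v) (p v) = p v) /\
  (forall v w, v != w -> mul (p v) (p w) = 0) /\
  (forall l m, kd l != dzero k -> kd m != dzero k -> ks l = kr m ->
     mul (s l) (s m) = s (kcomp l m) /\
     mul (st m) (st l) = st (kcomp l m)) /\
  (forall l, kd l != dzero k ->
     [/\ mul (p (kr l)) (s l) = s l, mul (s l) (p (ks l)) = s l,
         mul (p (ks l)) (st l) = st l & mul (st l) (p (kr l)) = st l]) /\
  (forall l m, kd l != dzero k -> kd m != dzero k -> kd l = kd m ->
     mul (st l) (s m) = if l == m then p (ks l) else 0) /\
  (* (KP4): the sum over the finite set v Lambda^n, given by any
     duplicate-free enumeration of it *)
  (forall v (n : deg_t k), n != dzero k ->
     forall e : seq (kP L), uniq e ->
       (forall l, (l \in e) = (kr l == v) && (kd l == n)) ->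
       p v = \sum_(l <- e) mul (s l) (st l)).

(* convention: s_v = s_{v^*} = p_v for vertices (degree-0 paths) *)
Definition Sfun (p : kV L -> A) (s : kP L -> A) (l : kP L) : A :=
  if kd l == dzero k then p (kr l) else s l.
End KP.

Definition is_nalg_hom (R : comPzRingType) (A B : lmodType R)
  (mA : nalg_mul A) (mB : nalg_mul B) (f : A -> B) : Prop :=
  (forall (r : R) x y, f (r *: x + y) = r *: f x + f y) /\
  (forall x y, f (mA x y) = mB (f x) (f y)).

Definition is_KP_algebra k (L : kgraph k) (R : comPzRingType) (A : lmodType R)
  (mul : nalg_mul A) (p : kV L -> A) (s st : kP L -> A) : Prop :=
  is_KP_family mul p s st /\
  forall (B : lmodType R) (mB : nalg_mul B) (q : kV L -> B) (t tt : kP L -> B),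
    is_KP_family mB q t tt ->
    (exists f : A -> B, is_nalg_hom mul mB f /\
       (forall v, f (p v) = q v) /\
       (forall l, kd l != dzero k -> f (s l) = t l /\ f (st l) = tt l)) /\
    (forall f g : A -> B,
       is_nalg_hom mul mB f -> is_nalg_hom mul mB g ->
       (forall v, f (p v) = q v) ->
       (forall l, kd l != dzero k -> f (s l) = t l /\ f (st l) = tt l) ->
       (forall v, g (p v) = q v) ->
       (forall l, kd l != dzero k -> g (s l) = t l /\ g (st l) = tt l) ->
       forall x, f x = g x).

(* Main.v *)
Require Import Defs.
From HB Require Import structures.
From mathcomp Require Import all_boot all_order all_algebra zify.
From mathcomp Require Import boolp.
From Stdlib Require Import ProofIrrelevance FunctionalExtensionality.
Set Implicit Arguments. Unset Strict Implicit. Unset Printing Implicit Defensive.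

Module Part1.
Import GRing.Theory.
Local Open Scope ring_scope.

Section Deg.
Variable k : nat.
Implicit Types a b c : deg_t k.
Lemma daddC a b : dadd a b = dadd b a.
Proof. by apply/ffunP=> i; rewrite !ffunE addnC. Qed.
Lemma daddA a b c : dadd a (dadd b c) = dadd (dadd a b) c.
Proof. by apply/ffunP=> i; rewrite !ffunE addnA. Qed.
Lemma dadd0 a : dadd a (dzero k) = a.
Proof. by apply/ffunP=> i; rewrite !ffunE addn0. Qed.
Lemma d0add a : dadd (dzero k) a = a.
Proof. by apply/ffunP=> i; rewrite !ffunE add0n. Qed.
Lemma daddI a b c : dadd a b = dadd a c -> b = c.
Proof. move/ffunP=> H; apply/ffunP=> i; have := H i; rewrite !ffunE; exact: addnI. Qed.
End Deg.

Section KG.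
Variables (k : nat) (L : kgraph k).
Notation P := (kP L).
Implicit Types a b c n : deg_t k.
Implicit Types l mu nu W : P.

Definition facP (l : P) a b (q : P * P) : bool :=
  [&& kd q.1 == a, kd q.2 == b, ks q.1 == kr q.2 & l == kcomp q.1 q.2].

Definition fac (l : P) a b : P * P :=
  match pselect (exists q, facP l a b q) with
  | left H => xchoose H
  | right _ => (l, l) end.

Lemma fac_ex l a b : kd l = dadd a b -> exists q, facP l a b q.
Proof.
move=> H; have [mu [nu [[h1 h2 h3 h4] _]]] := kfactor H.
by exists (mu, nu); rewrite /facP /= h1 h2 h3 h4 !eqxx.
Qed.

Lemma facE l a b : kd l = dadd a b ->
  [/\ kd (fac l a b).1 = a, kd (fac l a b).2 = b,
      ks (fac l a b).1 = kr (fac l a b).2 & l = kcomp (fac l a b).1 (fac l a b).2].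
Proof.
move=> H; rewrite /fac; case: pselect => [H'|/(_ (fac_ex H))//].
by have /and4P[/eqP-> /eqP-> /eqP-> /eqP<-] := xchooseP H'.
Qed.

Lemma fac_uniq l a b mu nu : kd mu = a -> kd nu = b -> ks mu = kr nu ->
  l = kcomp mu nu -> fac l a b = (mu, nu).
Proof.
move=> h1 h2 h3 h4.
have Hd : kd l = dadd a b by rewrite h4 kd_comp // h1 h2.
have [mu' [nu' [_ U]]] := kfactor Hd.
have [e1 e2 e3 e4] := facE Hd.
have [-> ->] := U _ _ h1 h2 h3 h4.
by have [<- <-] := U _ _ e1 e2 e3 e4; case: (fac l a b).
Qed.

Lemma deg0_id l : kd l = dzero k -> l = kid (kr l).
Proof.
move=> H.
have Hd : kd l = dadd (dzero k) (dzero k) by rewrite d0add.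
have e1 : fac l (dzero k) (dzero k) = (kid (kr l), l).
  by apply: fac_uniq; rewrite ?kd_id ?ks_id ?kcomp_idl.
have e2 : fac l (dzero k) (dzero k) = (l, kid (ks l)).
  by apply: fac_uniq; rewrite ?kd_id ?kr_id ?kcomp_idr.
by rewrite e1 in e2; case: e2.
Qed.

Lemma kid_inj : injective (@kid k L).
Proof. by move=> v w H; rewrite -(kr_id v) H kr_id. Qed.

Lemma fac_assoc l a b c : kd l = dadd a (dadd b c) ->
  let q := fac l a (dadd b c) in let q2 := fac q.2 b c in
  fac l (dadd a b) c = (kcomp q.1 q2.1, q2.2) /\ fac (kcomp q.1 q2.1) a b = (q.1, q2.1).
Proof.
move=> H /=; have := facE H.
case: (fac l a (dadd b c)) => l1 l2 /= [h1 h2 h3 h4].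
have := facE h2; case: (fac l2 b c) => m1 m2 /= [g1 g2 g3 g4].
have c1 : ks l1 = kr m1 by rewrite h3 g4 kr_comp.
split; apply: fac_uniq => //.
- by rewrite kd_comp // h1 g1.
- by rewrite ks_comp.
- by rewrite kcompA // -g4.
Qed.

Lemma pre_pre W n n' c : kd W = dadd (dadd n n') c ->
  (fac (fac W (dadd n n') c).1 n n').1 = (fac W n (dadd n' c)).1.
Proof.
move=> H; have := facE H.
case: (fac W (dadd n n') c) => W1 W2 /= [h1 h2 h3 h4].
have := facE h1; case: (fac W1 n n') => V1 V2 /= [g1 g2 g3 g4].
have c1 : ks V2 = kr W2 by rewrite -h3 g4 ks_comp.
suff -> : fac W n (dadd n' c) = (V1, kcomp V2 W2) by [].
apply: fac_uniq => //.
- by rewrite kd_comp // g2 h2.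
- by rewrite kr_comp.
- by rewrite h4 g4 kcompA.
Qed.

Lemma pre_comp (x y : P) n c : ks x = kr y -> kd x = dadd n c ->
  fac (kcomp x y) n (dadd c (kd y)) = ((fac x n c).1, kcomp (fac x n c).2 y).
Proof.
move=> Hab H; have := facE H.
case: (fac x n c) => a1 a2 /= [h1 h2 h3 h4].
have c1 : ks a2 = kr y by rewrite -Hab h4 ks_comp.
apply: fac_uniq => //.
- by rewrite kd_comp // h2.
- by rewrite kr_comp.
- by rewrite h4 kcompA.
Qed.
End KG.

End Part1.
Import Part1.

Module Part2.
Import GRing.Theory.

Section IPs.
Variables (k : nat) (L : kgraph k).
Notation P := (kP L).
Implicit Types a b c n : deg_t k.
Implicit Types l mu nu W : P.

Definition coh (x : deg_t k -> P) :=
  (forall n, kd (x n) = n) /\ (forall n n', (fac (x (dadd n n')) n n').1 = x n).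

Record IP := MkIP { ipf :> deg_t k -> P; ipc : coh ipf }.
Implicit Types x y : IP.

Lemma IP_ext x y : (forall n, x n = y n) -> x = y.
Proof.
case: x => f cf; case: y => g cg /= H.
have E : f = g by apply: functional_extensionality.
subst g; congr MkIP; exact: proof_irrelevance.
Qed.

Lemma ipd x n : kd (x n) = n.
Proof. by case: x => f [h h']. Qed.

Lemma ipc1 x n n' : (fac (x (dadd n n')) n n').1 = x n.
Proof. by case: x => f [h h']. Qed.

Lemma ip_split x n n' :
  [/\ x (dadd n n') = kcomp (x n) (fac (x (dadd n n')) n n').2,
      ks (x n) = kr (fac (x (dadd n n')) n n').2 &
      kd (fac (x (dadd n n')) n n').2 = n'].
Proof.
have [h1 h2 h3 h4] := facE (ipd x (dadd n n')).
by rewrite -(ipc1 x n n').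
Qed.

Definition rng x := kr (x (dzero k)).

Lemma kr_ip x n : kr (x n) = rng x.
Proof.
have [h1 h2 _] := ip_split x (dzero k) n.
have -> : x n = x (dadd (dzero k) n) by rewrite d0add.
by rewrite h1 kr_comp.
Qed.

Lemma ip0 x : x (dzero k) = kid (rng x).
Proof. exact: deg0_id (ipd x _). Qed.

Definition shr a x := fun n => (fac (x (dadd a n)) a n).2.

Lemma sh_coh a x : coh (shr a x).
Proof.
split=> [n|n n']; first by have [] := facE (ipd x (dadd a n)).
rewrite /shr.
have Hd : kd (x (dadd a (dadd n n'))) = dadd a (dadd n n') by rewrite ipd.
have [E1 E2] := fac_assoc Hd.
have E3 := ipc1 x (dadd a n) n'.
rewrite -daddA E1 /= in E3.
by rewrite -E3 E2.
Qed.

Definition sh a x : IP := MkIP (sh_coh a x).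

Lemma shE a x n : sh a x n = (fac (x (dadd a n)) a n).2.
Proof. by []. Qed.

Lemma at_split x a b : x (dadd a b) = kcomp (x a) (sh a x b) /\ ks (x a) = kr (sh a x b).
Proof. by have [] := ip_split x a b. Qed.

Lemma rng_sh a x : rng (sh a x) = ks (x a).
Proof. by rewrite /rng; have [_ ->] := at_split x a (dzero k). Qed.

Lemma sh_sh a b x : sh b (sh a x) = sh (dadd a b) x.
Proof.
apply: IP_ext => n; rewrite !shE.
have Hd : kd (x (dadd a (dadd b n))) = dadd a (dadd b n) by rewrite ipd.
have [E1 _] := fac_assoc Hd.
by rewrite -daddA E1.
Qed.

Lemma sh0 x : sh (dzero k) x = x.
Proof.
apply: IP_ext => n; rewrite shE d0add.
have -> : fac (x n) (dzero k) n = (kid (kr (x n)), x n) by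
  apply: fac_uniq; rewrite ?kd_id ?ipd ?ks_id ?kcomp_idl.
by [].
Qed.

Lemma at_cond x l m : ks l = kr m ->
  (x (dadd (kd l) (kd m)) == kcomp l m) = (x (kd l) == l) && (sh (kd l) x (kd m) == m).
Proof.
move=> Hlm; have [E1 E2] := at_split x (kd l) (kd m).
apply/eqP/andP => [H|[/eqP H1 /eqP H2]]; last by rewrite E1 H1 H2.
have F : fac (x (dadd (kd l) (kd m))) (kd l) (kd m) = (l, m) by apply: fac_uniq.
by rewrite shE -(ipc1 x (kd l) (kd m)) F.
Qed.

Definition catr l y := fun n => (fac (kcomp l (y n)) n (kd l)).1.

Lemma kd_ly l y n : ks l = rng y -> kd (kcomp l (y n)) = dadd n (kd l).
Proof. by move=> H; rewrite kd_comp ?kr_ip // ipd daddC. Qed.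

Lemma cat_coh l y : ks l = rng y -> coh (catr l y).
Proof.
move=> H; split=> [n|n n']; first by have [] := facE (kd_ly n H).
rewrite /catr.
have Hd : kd (kcomp l (y (dadd n n'))) = dadd (dadd n n') (kd l) by rewrite kd_ly.
rewrite pre_pre //.
have [S1 S2 S3] := ip_split y n n'.
rewrite S1 -kcompA ?kr_ip //.
have Hd2 : kd (kcomp l (y n)) = dadd n (kd l) by rewrite kd_ly.
have c : ks (kcomp l (y n)) = kr (fac (y (dadd n n')) n n').2.
  by rewrite ks_comp ?kr_ip.
have := pre_comp c Hd2.
by rewrite S3 (daddC (kd l) n') => ->.
Qed.

Definition ipcat l y : IP :=
  match ks l =P rng y with
  | ReflectT H => MkIP (cat_coh H)
  | ReflectF _ => y end.

Lemma catE l y n : ks l = rng y -> ipcat l y n = catr l y n.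
Proof. by rewrite /ipcat; case: (ks l =P rng y). Qed.

Lemma cat_at l y : ks l = rng y -> ipcat l y (kd l) = l.
Proof.
move=> H; rewrite catE // /catr.
by have -> : fac (kcomp l (y (kd l))) (kd l) (kd l) = (l, y (kd l))
  by apply: fac_uniq; rewrite ?ipd ?kr_ip.
Qed.

Lemma rng_cat l y : ks l = rng y -> rng (ipcat l y) = kr l.
Proof.
move=> H; rewrite /rng catE // /catr.
have [_ _ h3 h4] := facE (kd_ly (dzero k) H).
by move: h4 => /(congr1 (@kr k L)); rewrite !kr_comp ?kr_ip // => ->.
Qed.

Lemma sh_cat l y : ks l = rng y -> sh (kd l) (ipcat l y) = y.
Proof.
move=> H; apply: IP_ext => n; rewrite shE catE // /catr.
have [S1 S2 S3] := ip_split y n (kd l).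
rewrite (daddC (kd l) n) S1.
have c1 : ks l = kr (y n) by rewrite kr_ip.
have c2 : ks (kcomp l (y n)) = kr (fac (y (dadd n (kd l))) n (kd l)).2 by rewrite ks_comp.
rewrite -kcompA //.
rewrite (@fac_uniq _ _ _ _ _ (kcomp l (y n)) _ _ S3 c2) //=; last first.
  by rewrite kd_comp // ipd daddC.
have -> : fac (kcomp l (y n)) (kd l) n = (l, y n) by apply: fac_uniq; rewrite ?ipd.
by [].
Qed.

Lemma cat_sh x a : x = ipcat (x a) (sh a x).
Proof.
have H : ks (x a) = rng (sh a x) by rewrite rng_sh.
apply: IP_ext => n; rewrite catE // /catr.
have [E1 _] := at_split x a n.
rewrite -E1 ipd daddC.
by rewrite ipc1.
Qed.

Lemma cat_cat l m y : ks l = kr m -> ks m = rng y ->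
  ipcat l (ipcat m y) = ipcat (kcomp l m) y.
Proof.
move=> H1 H2.
set X := ipcat l (ipcat m y).
have H3 : ks l = rng (ipcat m y) by rewrite rng_cat.
have E1 : X (kd (kcomp l m)) = kcomp l m.
  rewrite kd_comp //; apply/eqP; rewrite at_cond //.
  by rewrite /X cat_at // sh_cat // cat_at // !eqxx.
have E2 : sh (kd (kcomp l m)) X = y.
  by rewrite kd_comp // -sh_sh /X sh_cat // sh_cat.
by rewrite {1}(cat_sh X (kd (kcomp l m))) E1 E2.
Qed.

Lemma cat_kid v y : rng y = v -> ipcat (kid v) y = y.
Proof.
move=> H.
have H' : ks (kid v) = rng y by rewrite ks_id.
by have := sh_cat H'; rewrite kd_id sh0.
Qed.

End IPs.

End Part2.
Import Part2.

Module Part3.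

Section Exist.
Variables (k : nat) (L : kgraph k).
Hypothesis NS : no_sources L.
Notation P := (kP L).
Implicit Types a b c n : deg_t k.

Definition Nd (N : nat) : deg_t k := [ffun _ => N].

Lemma NS' w : exists l : P, (kr l == w) && (kd l == Nd 1).
Proof. by have [l [h1 h2]] := NS w (Nd 1); exists l; rewrite h1 h2 !eqxx. Qed.

Definition ext w : P := xchoose (NS' w).
Lemma extP w : kr (ext w) = w /\ kd (ext w) = Nd 1.
Proof. by have /andP[/eqP -> /eqP ->] := xchooseP (NS' w). Qed.

Variable v : kV L.
Fixpoint ch (N : nat) : P :=
  if N is N'.+1 then kcomp (ch N') (ext (ks (ch N'))) else kid v.

Lemma ch_prop N : kd (ch N) = Nd N /\ kr (ch N) = v.
Proof.
elim: N => [|N [IH1 IH2]] /=; first by rewrite kd_id kr_id; split=> //; apply/ffunP=> i; rewrite !ffunE.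
have [e1 e2] := extP (ks (ch N)).
rewrite kd_comp ?e1 // kr_comp ?e1 //; split=> //.
by apply/ffunP=> i; rewrite !ffunE IH1 e2 !ffunE addn1.
Qed.

Lemma ch_ext N j : exists z : P, ks (ch N) = kr z /\ ch (N + j) = kcomp (ch N) z.
Proof.
elim: j => [|j [z [h1 h2]]]; first by exists (kid (ks (ch N))); rewrite addn0 kr_id kcomp_idr.
have [e1 e2] := extP (ks (ch (N + j))).
have c1 : ks z = kr (ext (ks (ch (N + j)))) by rewrite e1 h2 ks_comp.
exists (kcomp z (ext (ks (ch (N + j))))); split; first by rewrite kr_comp.
by rewrite addnS /= -kcompA // -h2.
Qed.

Definition bd N n : deg_t k := [ffun i => (N - n i)%N].

Lemma bdE N n : (forall i, n i <= N)%N -> dadd n (bd N n) = Nd N.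
Proof. by move=> H; apply/ffunP=> i; rewrite !ffunE subnKC. Qed.

Lemma bd_indep N N' n : (forall i, n i <= N)%N -> (forall i, n i <= N')%N ->
  (fac (ch N) n (bd N n)).1 = (fac (ch N') n (bd N' n)).1.
Proof.
wlog le : N N' / (N <= N')%N.
  move=> W h1 h2; case: (leqP N N') => [h|h]; first exact: W.
  by symmetry; apply: W => //; apply: ltnW.
move=> h1 h2.
have [z [c1 c2]] := ch_ext N (N' - N).
rewrite subnKC // in c2.
have Hd : kd (ch N) = dadd n (bd N n) by rewrite bdE // (proj1 (ch_prop N)).
have E : bd N' n = dadd (bd N n) (kd z).
  apply: (@daddI _ n); rewrite bdE // daddA -Hd -kd_comp // -c2.
  by rewrite (proj1 (ch_prop N')).
by rewrite c2 E pre_comp.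
Qed.

Definition Mx n : nat := \max_(i < k) n i.
Lemma Mx_ge n i : (n i <= Mx n)%N.
Proof. exact: (leq_bigmax i). Qed.

Definition xr n : P := (fac (ch (Mx n)) n (bd (Mx n) n)).1.

Lemma xr_coh : coh xr.
Proof.
split=> [n|n n'].
  have Hd : kd (ch (Mx n)) = dadd n (bd (Mx n) n) by rewrite bdE ?(proj1 (ch_prop _)) //; apply: Mx_ge.
  by have [] := facE Hd.
rewrite /xr.
set M := Mx (dadd n n').
have hM : forall i, (n i <= M)%N.
  move=> i; apply: leq_trans (Mx_ge (dadd n n') i); rewrite ffunE; exact: leq_addr.
have Hd : kd (ch M) = dadd (dadd n n') (bd M (dadd n n')).
  by rewrite bdE ?(proj1 (ch_prop _)) //; apply: Mx_ge.
rewrite pre_pre //.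
have E : dadd n' (bd M (dadd n n')) = bd M n.
  apply: (@daddI _ n); rewrite daddA bdE ?bdE //; apply: Mx_ge.
by rewrite E; apply: bd_indep => //; apply: Mx_ge.
Qed.

Definition xIP : IP L := MkIP xr_coh.

Lemma rng_xIP : rng xIP = v.
Proof.
rewrite /rng /= /xr.
have Hd : kd (ch (Mx (dzero k))) = dadd (dzero k) (bd (Mx (dzero k)) (dzero k)).
  by rewrite bdE ?(proj1 (ch_prop _)) //; apply: Mx_ge.
have [_ _ h3 h4] := facE Hd.
by move: h4 => /(congr1 (@kr k L)); rewrite kr_comp // (proj2 (ch_prop _)) => ->.
Qed.
End Exist.

Lemma ip_exists k (L : kgraph k) : no_sources L -> forall v, exists y : IP L, rng y = v.
Proof. by move=> NS v; exists (xIP NS v); apply: rng_xIP. Qed.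

End Part3.
Import Part3.

Module Part4.
Import GRing.Theory.
Local Open Scope ring_scope.

Section OpS.
Variables (R : comPzRingType) (X : Type).
Definition Fn := X -> R.

Record Op := MkOp { opf :> Fn -> Fn;
  opl : forall (r : R) (f g : Fn), opf (fun z => r * f z + g z) = fun z => r * opf f z + opf g z }.

Lemma Op_eq (F G : Op) : (forall f z, F f z = G f z) -> F = G.
Proof.
case: F => F hF; case: G => G hG /= H.
have E : F = G by apply: functional_extensionality => f; apply: functional_extensionality.
subst G; congr MkOp; exact: proof_irrelevance.
Qed.

HB.instance Definition _ := gen_eqMixin Op.
HB.instance Definition _ := gen_choiceMixin Op.

Lemma op0_lin r (f g : Fn) : (fun _ : X => (0 : R)) = (fun z => r * 0 + 0 :> R).
Proof. by apply: functional_extensionality => z; rewrite mulr0 addr0. Qed.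
Definition op0 : Op := @MkOp (fun (_ : Fn) (_ : X) => (0 : R)) (fun r f g => op0_lin r f g).

Lemma opadd_lin (F G : Op) r (f g : Fn) :
  (fun z => F (fun z => r * f z + g z) z + G (fun z => r * f z + g z) z) =
  (fun z => r * (F f z + G f z) + (F g z + G g z)).
Proof.
apply: functional_extensionality => z; rewrite (opl F) (opl G) /=.
by rewrite mulrDr addrACA.
Qed.
Definition opadd (F G : Op) : Op := @MkOp (fun f z => F f z + G f z) (opadd_lin F G).

Lemma opopp_lin (F : Op) r (f g : Fn) :
  (fun z => - F (fun z => r * f z + g z) z) = (fun z => r * (- F f z) + - F g z).
Proof.
apply: functional_extensionality => z; rewrite (opl F) /=.
by rewrite opprD mulrN.
Qed.
Definition opopp (F : Op) : Op := @MkOp (fun f z => - F f z) (opopp_lin F).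

Lemma opscale_lin (a : R) (F : Op) r (f g : Fn) :
  (fun z => a * F (fun z => r * f z + g z) z) = (fun z => r * (a * F f z) + a * F g z).
Proof.
apply: functional_extensionality => z; rewrite (opl F) /=.
by rewrite mulrDr !mulrA (mulrC a r).
Qed.
Definition opscale (a : R) (F : Op) : Op := @MkOp (fun f z => a * F f z) (opscale_lin a F).

Lemma opaddA : associative opadd.
Proof. by move=> F G H; apply: Op_eq => f z /=; rewrite addrA. Qed.
Lemma opaddC : commutative opadd.
Proof. by move=> F G; apply: Op_eq => f z /=; rewrite addrC. Qed.
Lemma opadd0 : left_id op0 opadd.
Proof. by move=> F; apply: Op_eq => f z /=; rewrite add0r. Qed.
Lemma opaddN : left_inverse op0 opopp opadd.
Proof. by move=> F; apply: Op_eq => f z /=; rewrite addNr. Qed.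

HB.instance Definition _ := GRing.isZmodule.Build Op opaddA opaddC opadd0 opaddN.

Lemma opsA a b (F : Op) : opscale a (opscale b F) = opscale (a * b) F.
Proof. by apply: Op_eq => f z /=; rewrite mulrA. Qed.
Lemma ops1 : left_id 1 opscale.
Proof. by move=> F; apply: Op_eq => f z /=; rewrite mul1r. Qed.
Lemma opsDr : right_distributive opscale +%R.
Proof. by move=> a F G; apply: Op_eq => f z /=; rewrite mulrDr. Qed.
Lemma opsDl (F : Op) : {morph opscale^~ F : a b / a + b}.
Proof. by move=> a b; apply: Op_eq => f z /=; rewrite mulrDl. Qed.

HB.instance Definition _ := GRing.Zmodule_isLmodule.Build R Op opsA ops1 opsDr opsDl.

Lemma opD (F : Op) (a b : Fn) : F (fun z => a z + b z) = fun z => F a z + F b z.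
Proof.
have := opl F 1 a b.
have -> : (fun z => 1 * a z + b z) = (fun z => a z + b z)
  by apply: functional_extensionality => z; rewrite mul1r.
move=> ->; apply: functional_extensionality => z; by rewrite mul1r.
Qed.

Lemma opZ (F : Op) (r : R) (a : Fn) : F (fun z => r * a z) = fun z => r * F a z.
Proof.
have H0 : F (fun _ => 0) = fun _ => 0.
  have := opD F (fun _ => 0) (fun _ => 0).
  have -> : (fun _ : X => (0:R) + 0) = (fun _ => 0)
    by apply: functional_extensionality => z; rewrite addr0.
  move=> H; apply: functional_extensionality => z.
  have h := congr1 (fun h => h z) H; simpl in h.
  have := congr1 (fun t => t - F (fun _ => 0) z) h.
  by rewrite /= subrr addrK => <-.
have := opl F r a (fun _ => 0).
have -> : (fun z => r * a z + 0) = (fun z => r * a z)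
  by apply: functional_extensionality => z; rewrite addr0.
move=> ->; rewrite H0; apply: functional_extensionality => z; by rewrite addr0.
Qed.

Lemma opmul_lin (F G : Op) r (f g : Fn) :
  F (G (fun z => r * f z + g z)) = fun z => r * F (G f) z + F (G g) z.
Proof. by rewrite (opl G) (opl F). Qed.
Definition opmul (F G : Op) : Op := @MkOp (fun f => F (G f)) (opmul_lin F G).

Lemma amA (x y z : Op) : opmul x (opmul y z) = opmul (opmul x y) z.
Proof. by apply: Op_eq. Qed.
Lemma amDl (x y z : Op) : opmul (x + y) z = opmul x z + opmul y z.
Proof. by apply: Op_eq. Qed.
Lemma amDr (x y z : Op) : opmul x (y + z) = opmul x y + opmul x z.
Proof. by apply: Op_eq => f w /=; rewrite opD. Qed.
Lemma amZl (r : R) (x y : Op) : opmul (r *: x) y = r *: opmul x y.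
Proof. by apply: Op_eq. Qed.
Lemma amZr (r : R) (x y : Op) : opmul x (r *: y) = r *: opmul x y.
Proof. by apply: Op_eq => f w /=; rewrite opZ. Qed.

Definition opM : nalg_mul Op := NAlgMul amA amDl amDr amZl amZr.

Lemma op_sum (I : Type) (e : seq I) (F : I -> Op) f z :
  (\sum_(i <- e) F i) f z = \sum_(i <- e) F i f z.
Proof.
elim: e => [|i e IH]; first by rewrite !big_nil.
by rewrite !big_cons -IH.
Qed.

Lemma op_scale (r : R) (F : Op) f z : (r *: F) f z = r * F f z.
Proof. by []. Qed.
End OpS.

End Part4.
Import Part4.

Module Part5.
Import GRing.Theory.
Local Open Scope ring_scope.

Section Rep.
Variables (k : nat) (L : kgraph k) (R : comPzRingType).
Notation P := (kP L).
Definition Gt := {ffun 'I_k -> int}.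
Definition gsub (g : Gt) (a : deg_t k) : Gt := [ffun i => g i - (a i)%:Z].
Definition gadd (g : Gt) (a : deg_t k) : Gt := [ffun i => g i + (a i)%:Z].

Lemma gsub_gsub g a b : gsub (gsub g a) b = gsub g (dadd a b).
Proof. by apply/ffunP=> i; rewrite !ffunE PoszD opprD addrA. Qed.
Lemma gadd_gadd g a b : gadd (gadd g b) a = gadd g (dadd a b).
Proof. by apply/ffunP=> i; rewrite !ffunE PoszD (addrC (a i)%:Z) addrA. Qed.
Lemma gsub_gadd g a : gsub (gadd g a) a = g.
Proof. by apply/ffunP=> i; rewrite !ffunE addrK. Qed.
Lemma gadd_gsub g a : gadd (gsub g a) a = g.
Proof. by apply/ffunP=> i; rewrite !ffunE subrK. Qed.
Lemma gsub0 g : gsub g (dzero k) = g.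
Proof. by apply/ffunP=> i; rewrite !ffunE subr0. Qed.
Lemma gadd0 g : gadd g (dzero k) = g.
Proof. by apply/ffunP=> i; rewrite !ffunE addr0. Qed.

Definition X := (IP L * Gt)%type.
Notation Fn := (Fn R X).
Notation Op := (Op R X).

Definition Pf (v : kV L) (f : Fn) : Fn := fun z => if rng z.1 == v then f z else 0.
Definition Sf (l : P) (f : Fn) : Fn :=
  fun z => if ipf z.1 (kd l) == l then f (sh (kd l) z.1, gsub z.2 (kd l)) else 0.
Definition Tf (l : P) (f : Fn) : Fn :=
  fun z => if rng z.1 == ks l then f (ipcat l z.1, gadd z.2 (kd l)) else 0.

Lemma Pf_lin v r (f g : Fn) : Pf v (fun z => r * f z + g z) = fun z => r * Pf v f z + Pf v g z.
Proof. by apply: functional_extensionality => z; rewrite /Pf; case: ifP; rewrite ?mulr0 ?addr0. Qed.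
Lemma Sf_lin l r (f g : Fn) : Sf l (fun z => r * f z + g z) = fun z => r * Sf l f z + Sf l g z.
Proof. by apply: functional_extensionality => z; rewrite /Sf; case: ifP; rewrite ?mulr0 ?addr0. Qed.
Lemma Tf_lin l r (f g : Fn) : Tf l (fun z => r * f z + g z) = fun z => r * Tf l f z + Tf l g z.
Proof. by apply: functional_extensionality => z; rewrite /Tf; case: ifP; rewrite ?mulr0 ?addr0. Qed.

Definition Pop v : Op := @MkOp R X (Pf v) (@Pf_lin v).
Definition Sop l : Op := @MkOp R X (Sf l) (@Sf_lin l).
Definition Top l : Op := @MkOp R X (Tf l) (@Tf_lin l).

Lemma sum_if (T : eqType) (e : seq T) (u : T) (a : R) : uniq e ->
  \sum_(l <- e) (if u == l then a else 0) = if u \in e then a else 0.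
Proof.
elim: e => [|x e IH]; first by rewrite big_nil.
move=> /= /andP[nx ue]; rewrite big_cons in_cons IH //.
case: (u =P x) => [->|_] /=; last by rewrite add0r.
by rewrite (negPf nx) addr0.
Qed.

Lemma rep_KP : is_KP_family (opM R X) Pop Sop Top.
Proof.
rewrite /is_KP_family; split; [|split; [|split; [|split; [|split]]]].
- by move=> v; apply: Op_eq => f z /=; rewrite /Pf; case: (rng z.1 == v).
- move=> v w vw; apply: Op_eq => f z /=; rewrite /Pf.
  case: (rng z.1 =P v) => // ->; by rewrite (negPf vw).
- move=> l m _ _ Hlm; split; apply: Op_eq => f z /=.
  + rewrite /Sf kd_comp // at_cond // sh_sh gsub_gsub.
    by case: (z.1 (kd l) == l).
  + rewrite /Tf ks_comp //.
    case: (rng z.1 =P ks m) => H //.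
    by rewrite rng_cat // Hlm eqxx cat_cat // kd_comp // gadd_gadd.
- move=> l _; split; apply: Op_eq => f z /=.
  + rewrite /Pf /Sf; case: (ipf z.1 (kd l) =P l) => H; last by case: (rng z.1 == kr l).
    by rewrite -H kr_ip eqxx.
  + rewrite /Pf /Sf; case: (ipf z.1 (kd l) =P l) => H //.
    by rewrite /= rng_sh H eqxx.
  + by rewrite /Pf /Tf; case: (rng z.1 == ks l).
  + rewrite /Pf /Tf; case: (rng z.1 =P ks l) => H //.
    by rewrite /= rng_cat // eqxx.
- move=> l m _ _ Hd; case: (l =P m) => [<-|nlm]; apply: Op_eq => f z /=.
  + rewrite /Pf /Sf /Tf; case: (rng z.1 =P ks l) => H //=.
    by rewrite cat_at // eqxx sh_cat // gsub_gadd; case: z H.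
  + rewrite /Sf /Tf; case: (rng z.1 =P ks l) => H //=.
    rewrite -Hd cat_at //; case: (l =P m) => // e; by case: nlm.
- move=> v n _ e ue He; apply: Op_eq => f z.
  rewrite op_sum /=.
  transitivity (\sum_(l <- e) (if ipf z.1 n == l then f z else 0)); last first.
    apply: eq_big_seq => l le /=.
    have /andP[_ /eqP dl] : (kr l == v) && (kd l == n) by rewrite -He.
    rewrite /Sf /Tf dl; case: (ipf z.1 n =P l) => [E|] //=.
    by rewrite rng_sh E eqxx -E -cat_sh gadd_gsub; case: z E.
  rewrite sum_if // He ipd eqxx andbT kr_ip /Pf.
  by case: (rng z.1 == v).
Qed.

Lemma Sop0 l : kd l = dzero k -> Sop l = Pop (kr l).
Proof.
move=> H; apply: Op_eq => f z /=; rewrite /Sf /Pf H ip0 sh0 gsub0.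
rewrite {1}(deg0_id H).
case: (rng z.1 =P kr l) => [->|ne]; first by rewrite eqxx; case: z.
case: eqP => // /kid_inj E; by case: ne.
Qed.

Lemma Top0 l : kd l = dzero k -> Top l = Pop (kr l).
Proof.
move=> H; apply: Op_eq => f z /=; rewrite /Tf /Pf H gadd0.
have E : ks l = kr l by rewrite {1}(deg0_id H) ks_id.
rewrite E; case: (rng z.1 =P kr l) => // H'.
by rewrite (deg0_id H) cat_kid //; case: z H'.
Qed.
End Rep.

End Part5.
Import Part5.
Import GRing.Theory.
Local Open Scope ring_scope.

Lemma gdeg_inj k (g0 : Gt k) (m a b : deg_t k) :
  gadd (gsub (gadd (gsub g0 m) a) b) m = g0 -> b = a.
Proof.
move/ffunP=> H; apply/ffunP=> i; have := H i; rewrite /gadd /gsub !ffunE => h.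
move: h; move: (g0 i) (m i) (a i) (b i) => G M x y h.
have : (G - M%:Z + x%:Z - y%:Z + M%:Z = G)%R by exact: h.
move=> h'; lia.
Qed.

Theorem lemma4p1 (k : nat) (L : kgraph k) (R : comPzRingType)
  (A : lmodType R) (mul : nalg_mul A)
  (p : kV L -> A) (s st : kP L -> A) (m : deg_t k) :
  row_finite L -> no_sources L ->
  is_KP_algebra mul p s st ->
  forall (e : seq (kP L * kP L)) (c : kP L * kP L -> R),
    uniq e ->
    (forall ab, ab \in e -> ks ab.1 = ks ab.2 /\ kd ab.2 = m) ->
    \sum_(ab <- e) c ab *: mul (Sfun p s ab.1) (Sfun p st ab.2) = 0 ->
    forall ab, ab \in e -> c ab = 0.
Proof.
move=> _ NS [_ HU] e c ue He Hsum ab0 ab0e.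
have [[F [[Flin Fmul] [Fp Fs]]] _] := HU _ (opM R (X L)) (@Pop k L R) (@Sop k L R) (@Top k L R) (rep_KP L R).
have F0 : F 0 = 0.
  have h := Flin 1 0 0; rewrite !scale1r addr0 in h.
  have := congr1 (fun t => t - F 0) h; rewrite /= subrr addrK => <- //.
have FD x y : F (x + y) = F x + F y by have := Flin 1 x y; rewrite !scale1r.
have FZ r x : F (r *: x) = r *: F x by have := Flin r x 0; rewrite !addr0 F0 addr0.
have FS1 a : F (Sfun p s a) = Sop R a.
  rewrite /Sfun; case: eqP => [H|/eqP H]; first by rewrite Fp Sop0.
  by have [] := Fs a H.
have FS2 b : F (Sfun p st b) = Top R b.
  rewrite /Sfun; case: eqP => [H|/eqP H]; first by rewrite Fp Top0.
  by have [] := Fs b H.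
have HS : \sum_(ab <- e) c ab *: opM R (X L) (Sop R ab.1) (Top R ab.2) = 0.
  have <- : F (\sum_(ab <- e) c ab *: mul (Sfun p s ab.1) (Sfun p st ab.2)) =
    \sum_(ab <- e) c ab *: opM R (X L) (Sop R ab.1) (Top R ab.2).
    elim: e {ue He ab0e Hsum} => [|x e IH]; first by rewrite !big_nil F0.
    by rewrite !big_cons FD IH FZ Fmul FS1 FS2.
  by rewrite Hsum F0.
case: ab0 ab0e => a0 b0 ab0e.
have [Hs0 Hd0] := He _ ab0e; rewrite /= in Hs0 Hd0.
have [y Hy] := ip_exists NS (ks a0).
set g0 : Gt k := [ffun => 0].
pose f0 : Fn R (X L) := fun z => if (ipf z.1 m == b0) && (z.2 == g0) then 1 else 0.
pose z0 : X L := (ipcat a0 y, gadd (gsub g0 m) (kd a0)).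
have := congr1 (fun G : Op R (X L) => G f0 z0) HS.
rewrite /= op_sum.
have term : forall ab, ab \in e ->
    (c ab *: opM R (X L) (Sop R ab.1) (Top R ab.2)) f0 z0 = if (a0, b0) == ab then c (a0, b0) else 0.
  case=> a b abe; have [Hsab Hdb] := He _ abe; rewrite /= in Hsab Hdb.
  rewrite op_scale /= /Sf /Tf /f0 /z0 /=.
  have Hsy : ks a0 = rng y by rewrite Hy.
  case: ((a0, b0) =P (a, b)) => [[<- <-]|ne].
    rewrite (cat_at Hsy) eqxx (sh_cat Hsy) Hy Hs0 eqxx Hd0.
    have hb : ks b0 = rng y by rewrite Hy Hs0.
    by rewrite -Hd0 (cat_at hb) gsub_gadd gadd_gsub !eqxx mulr1.
  case: (ipf (ipcat a0 y) (kd a) =P a) => [Ha|]; last by rewrite mulr0.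
  case: (rng (sh (kd a) (ipcat a0 y)) =P ks b) => [Hb|]; last by rewrite mulr0.
  case: andP => [[/eqP H3 /eqP H4]|]; last by rewrite mulr0.
  exfalso; apply: ne.
  rewrite Hdb in H4; have Eda := gdeg_inj H4.
  rewrite Eda cat_at // in Ha; subst a.
  rewrite sh_cat // in Hb H3.
  by rewrite -Hdb (cat_at (esym Hb)) in H3; subst b.
rewrite (eq_big_seq _ term) sum_if // ab0e => ->.
by [].
Qed.
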